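(* Fix $\nu>1$ and write $F_{\text{exist}}=\nu(\nu+1)$, $F_{\text{2d}}=\nu(\nu+1)/\sqrt{\nu^2+\nu-1}$. For $\mu_L\ge0$, $k,\eta\in\mathbb{R}$, consider the roots $\lambda$ of $\det\big(G(-\infty;\lambda,\eta)-(ik+\mu_L)I\big)=0$ (the $\mu_L$-weighted dispersion relations at $-\infty$). (i) If $F_{\text{2d}}<F<F_{\text{exist}}$, then for every $\mu_L\ge0$ and every $R>0$ there exist $(k,\eta)$ with $k^2+\eta^2\ge R$ and a root $\lambda$ with $\Re\lambda>0$. (ii) If $2<F<F_{\text{2d}}$ and $$\mu_L\in\Big(\tfrac{F^2}{2}-\tfrac{F^2}{F_{\text{exist}}}-\tfrac{F}{F_{\text{2d}}}\sqrt{F_{\text{2d}}^2-F^2},\ \tfrac{F^2}{2}-\tfrac{F^2}{F_{\text{exist}}}+\tfrac{F}{F_{\text{2d}}}\sqrt{F_{\text{2d}}^2-F^2}\Big),$$ then this interval is contained in $(0,\infty)$, and there exists $R>0$ such that for all real $(k,\eta)$ with $k^2+\eta^2\ge R$ every root $\lambda$ satisfies $\Re\lambda<0$.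
   Context: $G(-\infty;\lambda,\eta)=(E-\lambda I-i\eta A_2)A_1^{-1}$ with, at $(H,Q)=(1,1)$ and $s=\frac{\nu^2+\nu+1}{\nu(\nu+1)}$, $A_1=\begin{pmatrix}-s&1&0\\ H/F^2-Q^2/H^2&2Q/H-s&0\\0&0&Q/H-s\end{pmatrix}$, $A_2=\begin{pmatrix}0&0&1\\0&0&Q/H\\ H/F^2&0&0\end{pmatrix}$, $E=\begin{pmatrix}0&0&0\\ 2Q^2/H^3+1&-2Q/H^2&0\\0&0&-Q/H^2\end{pmatrix}$. This is the limiting matrix at the upstream endstate $(1,1,0)$ of a hydraulic shock of the inviscid Saint-Venant equations with Froude number $F$ and downstream state $(\nu^{-2},\nu^{-3},0)$; $A_1$ is invertible for $F\neq F_{\text{exist}}$. *)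

(* Defs.v *)
From HB Require Import structures.
From mathcomp Require Import all_boot all_order all_algebra.
From mathcomp Require Import complex.
From mathcomp Require Import reals.
Set Implicit Arguments. Unset Strict Implicit. Unset Printing Implicit Defensive.
Import Order.TTheory GRing.Theory Num.Theory.
Local Open Scope ring_scope.
Local Open Scope complex_scope.

Section Dispersion.
Variable R : realType.

Definition mx3 (rows : seq (seq R)) : 'M[R]_3 :=
  \matrix_(i < 3, j < 3) nth 0 (nth [::] rows i) j.

Definition s_of (nu : R) : R := (nu ^+ 2 + nu + 1) / (nu * (nu + 1)).

Definition F_exist (nu : R) : R := nu * (nu + 1).
Definition F_2d (nu : R) : R := nu * (nu + 1) / Num.sqrt (nu ^+ 2 + nu - 1).

Definition A1_HQ (nu F H Q : R) : 'M[R]_3 :=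
  mx3
    [:: [:: - s_of nu; 1; 0];
        [:: H / F ^+ 2 - Q ^+ 2 / H ^+ 2; 2 * Q / H - s_of nu; 0];
        [:: 0; 0; Q / H - s_of nu]].

Definition A2_HQ (F H Q : R) : 'M[R]_3 :=
  mx3
    [:: [:: 0; 0; 1];
        [:: 0; 0; Q / H];
        [:: H / F ^+ 2; 0; 0]].

Definition E_HQ (H Q : R) : 'M[R]_3 :=
  mx3
    [:: [:: 0; 0; 0];
        [:: 2 * Q ^+ 2 / H ^+ 3 + 1; - (2 * Q / H ^+ 2); 0];
        [:: 0; 0; - (Q / H ^+ 2)]].

Definition A1 (nu F : R) : 'M[R]_3 := A1_HQ nu F 1 1.
Definition A2 (F : R) : 'M[R]_3 := A2_HQ F 1 1.
Definition E0 : 'M[R]_3 := E_HQ 1 1.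

Definition cmx (M : 'M[R]_3) : 'M[R[i]]_3 := map_mx (fun x => x%:C) M.

Definition Gminf (nu F : R) (lambda : R[i]) (eta : R) : 'M[R[i]]_3 :=
  (cmx E0 - lambda%:M - ('i * eta%:C) *: cmx (A2 F)) *m invmx (cmx (A1 nu F)).

Definition disp_root (nu F muL k eta : R) (lambda : R[i]) : Prop :=
  \det (Gminf nu F lambda eta - ('i * k%:C + muL%:C)%:M) = 0.

End Dispersion.

(* Main.v *)
Require Import Defs.
From HB Require Import structures.
From mathcomp Require Import all_boot all_order all_algebra.
From mathcomp Require Import complex reals.
From mathcomp Require Import ring lra.
Import Order.TTheory GRing.Theory Num.Theory.
Local Open Scope ring_scope.

Lemma det3 (T : comNzRingType) (A : 'M[T]_3) :
  \det A = A 0 0 * (A 1 1 * A 2%:R 2%:R - A 1 2%:R * A 2%:R 1)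
         - A 0 1 * (A 1 0 * A 2%:R 2%:R - A 1 2%:R * A 2%:R 0)
         + A 0 2%:R * (A 1 0 * A 2%:R 1 - A 1 1 * A 2%:R 0).
Proof.
rewrite (expand_det_row _ 0) !big_ord_recr big_ord0 /= add0r.
rewrite /cofactor !(expand_det_row _ 0) !big_ord_recr !big_ord0 /= !add0r.
rewrite /cofactor !det_mx11 !mxE /=.
pose B (i j : nat) := A (inord i) (inord j).
have E : forall i j : 'I_3, A i j = B i j by move=> i j; rewrite /B !inord_val.
rewrite !E /=.
rewrite !expr0 ?expr1 ?expr2 /=. ring.
Qed.

Section Aux.
Local Open Scope complex_scope.
Variable R : realType.
Lemma entryN (X Y Z : 'M[R[i]]_3) (lam mu c : R[i]) i j :
  (X - lam%:M - c *: Y - mu *: Z) i j = X i j - lam *+ (i == j) - c * Y i j - mu * Z i j.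
Proof. by rewrite !mxE. Qed.
Lemma cmxE (M : 'M[R]_3) i j : cmx M i j = (M i j)%:C.
Proof. by rewrite mxE. Qed.
Lemma mx3E (rows : seq (seq R)) i j : mx3 rows i j = nth 0 (nth [::] rows i) j.
Proof. by rewrite mxE. Qed.

Lemma detN (nu F : R) (lam mu y : R[i]) (eta : R) :
  y = lam - mu * (s_of nu - 1)%:C + 1 ->
  \det (cmx (@E0 R) - lam%:M - ('i * eta%:C) *: cmx (A2 F) - mu *: cmx (A1 nu F)) =
  - (y ^+ 3 + (mu - 1 - (1 / F ^+ 2)%:C * mu ^+ 2) * y) + ('i * eta%:C) ^+ 2 * (1 / F ^+ 2)%:C * (y + 1).
Proof.
move=> ->.
set M := (X in \det X).
rewrite (@det3 _ M).
rewrite /M !entryN.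
rewrite !cmxE.
rewrite /E0 /E_HQ /A1 /A1_HQ /A2 /A2_HQ !mx3E.
rewrite ![nth _ _ _]/=.
have e01 : ((0:'I_3) == 1) = false by [].
have e02 : ((0:'I_3) == 2%:R) = false by [].
have e10 : ((1:'I_3) == 0) = false by [].
have e12 : ((1:'I_3) == 2%:R) = false by [].
have e20 : ((2%:R:'I_3) == 0) = false by [].
have e21 : ((2%:R:'I_3) == 1) = false by [].
rewrite !eqxx e01 e02 e10 e12 e20 e21 !mulr0n !mulr1n.
rewrite !expr1n !divr1 !mulr1.
rewrite !rmorphB !rmorphN !rmorphD /=.
ring.
Qed.
Lemma cmulE (a b c d : R) : (a +i* b) * (c +i* d) = (a*c - b*d) +i* (a*d + b*c).
Proof. by []. Qed.
Lemma caddE (a b c d : R) : (a +i* b) + (c +i* d) = (a + c) +i* (b + d).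
Proof. by []. Qed.
Lemma coppE (a b : R) : - (a +i* b) = (- a) +i* (- b).
Proof. by []. Qed.
Lemma c1E : (1 : R[i]) = 1 +i* 0. Proof. by []. Qed.
Lemma cRE (a : R) : a%:C = a +i* 0. Proof. by []. Qed.

Lemma detA1C (nu F : R) : \det (cmx (A1 nu F)) =
  ((1 - s_of nu) * ((s_of nu - 1) ^+ 2 - 1 / F ^+ 2))%:C.
Proof.
rewrite (@det3 _ (cmx (A1 nu F))) !cmxE /A1 /A1_HQ !mx3E.
rewrite ![nth _ _ _]/=.
rewrite !expr1n !divr1 !mulr1.
rewrite !rmorphM !rmorphB !rmorphN !rmorphXn /=.
ring.
Qed.

Lemma A1_unit (nu F : R) : (1 - s_of nu) * ((s_of nu - 1) ^+ 2 - 1 / F ^+ 2) != 0 ->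
  cmx (A1 nu F) \in unitmx.
Proof.
move=> h; rewrite unitmxE detA1C unitfE; apply/eqP => /complexI; exact/eqP.
Qed.

Lemma Gsub (nu F : R) (lam mu : R[i]) (eta : R) : cmx (A1 nu F) \in unitmx ->
  Gminf nu F lam eta - mu%:M =
  (cmx (@E0 R) - lam%:M - ('i * eta%:C) *: cmx (A2 F) - mu *: cmx (A1 nu F)) *m invmx (cmx (A1 nu F)).
Proof.
move=> hu; rewrite /Gminf [RHS]mulmxBl -scalemxAl mulmxV // scalemx1 //.
Qed.

Lemma disp_det (nu F mL k eta : R) (lam : R[i]) : cmx (A1 nu F) \in unitmx ->
  disp_root nu F mL k eta lam <->
  \det (cmx (@E0 R) - lam%:M - ('i * eta%:C) *: cmx (A2 F) - ('i * k%:C + mL%:C) *: cmx (A1 nu F)) = 0.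
Proof.
move=> hu; rewrite /disp_root Gsub // det_mulmx det_inv.
have hd : \det (cmx (A1 nu F)) != 0 by move: hu; rewrite unitmxE unitfE.
split; first by move/eqP; rewrite mulf_eq0 invr_eq0 (negbTE hd) orbF => /eqP.
by move=> ->; rewrite mul0r.
Qed.

Lemma muE (mL k : R) : 'i * k%:C + mL%:C = mL +i* k.
Proof. rewrite !cRE /= cmulE caddE; congr (_ +i* _); ring. Qed.
Definition REq (x b k E a c Q : R) :=
  x^+3 - 3*x*b^+2 + (Q + a*k^+2)*x - k*c*b + a*E*(x+1).
Definition IMq (x b k E a c Q : R) :=
  3*x^+2*b - b^+3 + (Q + a*k^+2)*b + k*c*x + a*E*b.

Lemma build (x b kap a c Q : R) : a != 0 ->
  b^+2*(a*kap^+2 + c*kap + 2*x - 1) + (Q + 2*x^+3 + 3*x^+2 + c*kap*x*(x+1)) = 0 ->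
  REq x b (kap*b) ((x^+2+b^+2)*(2*x+c*kap)/a) a c Q = 0 /\
  IMq x b (kap*b) ((x^+2+b^+2)*(2*x+c*kap)/a) a c Q = 0.
Proof.
move=> ha h; split.
  have -> : REq x b (kap*b) ((x^+2+b^+2)*(2*x+c*kap)/a) a c Q =
    x * (b^+2*(a*kap^+2 + c*kap + 2*x - 1) + (Q + 2*x^+3 + 3*x^+2 + c*kap*x*(x+1))).
    by rewrite /REq; field.
  by rewrite h mulr0.
have -> : IMq x b (kap*b) ((x^+2+b^+2)*(2*x+c*kap)/a) a c Q =
    b * (b^+2*(a*kap^+2 + c*kap + 2*x - 1) + (Q + 2*x^+3 + 3*x^+2 + c*kap*x*(x+1))).
  by rewrite /IMq; field.
by rewrite h mulr0.
Qed.

Lemma no_root (x b k E a c Q F : R) : 0 < a -> a * F^+2 = 1 -> 2 < F -> 0 <= E ->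
  Q + F^+2*c^+2/4 = F^+2/4 - 1 -> 1 + F^+2*c^+2/4 <= 2*x ->
  REq x b k E a c Q = 0 -> IMq x b k E a c Q = 0 -> False.
Proof.
move=> ha haF hF hE hQ hx hre him.
set A := F^+2*c^+2/4 in hQ hx.
have hA : 0 <= A by rewrite /A; apply: divr_ge0 => //; apply: mulr_ge0; apply: sqr_ge0.
have hx0 : 0 < x by lra.
have hF2 : 4 < F^+2 by clear -hF; nra.
have hn0 : 0 < F^+2/4 - 1 by lra.
have hQx : 0 < Q + x^+2.
  have h1 : 0 <= (2*x - (1 + A)) * (2*x + (1 + A)) by apply: mulr_ge0; lra.
  have h2 : 0 <= (1 - A)^+2 by apply: sqr_ge0.
  have : A <= x^+2 by nra.
  lra.
have hcA : c^+2 = 4 * a * A.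
  rewrite /A; have -> : 4 * a * (F^+2*c^+2/4) = (a * F^+2) * c^+2 by field.
  by rewrite haF mul1r.
have [b0|bn0] := eqVneq b 0.
  move: hre; rewrite /REq b0 => hre.
  have h1 : 0 <= a * k^+2 * x by apply: mulr_ge0; [apply: mulr_ge0; [lra|apply: sqr_ge0]|lra].
  have h2 : 0 <= a * E * (x + 1) by apply: mulr_ge0; [apply: mulr_ge0; lra| lra].
  have h3 : 0 < x * (Q + x^+2) by apply: mulr_gt0.
  have : x^+3 - 3*x*0^+2 + (Q + a*k^+2)*x - k*c*0 + a*E*(x+1) =
     x * (Q + x^+2) + a * k^+2 * x + a * E * (x + 1) by ring.
  lra.
set kap := k / b.
set w := c * kap.
have hk : k = kap * b by rewrite /kap divfK.
have id1 : b * REq x b k E a c Q - x * IMq x b k E a c Q =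
   b * (a*E - (x^+2+b^+2)*(2*x + w)) by rewrite /REq /IMq /w hk; ring.
have id2 : b * (b^+2*(a*kap^+2 + c*kap + 2*x - 1) + (Q + 2*x^+3 + 3*x^+2 + w*x*(x+1)))
   = IMq x b k E a c Q + b*((x^+2+b^+2)*(2*x+w) - a*E) by rewrite /IMq /w hk; ring.
rewrite hre him !mulr0 subr0 in id1.
have hE2 : a * E = (x^+2+b^+2)*(2*x + w).
  by apply/eqP; rewrite -subr_eq0; apply/eqP; move/eqP: id1; rewrite eq_sym mulf_eq0 (negbTE bn0) /= => /eqP.
have hw : 0 <= 2 * x + w.
  have hp : 0 < x^+2 + b^+2 by nra.
  have : 0 <= (x^+2+b^+2)*(2*x + w) by rewrite -hE2; apply: mulr_ge0; lra.
  by rewrite pmulr_rge0.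
rewrite him add0r -hE2 subrr mulr0 in id2.
have hN : b^+2*(a*kap^+2 + c*kap + 2*x - 1) + (Q + 2*x^+3 + 3*x^+2 + w*x*(x+1)) = 0.
  by move/eqP: id2; rewrite mulf_eq0 (negbTE bn0) /= => /eqP.
have hg : 0 <= a*kap^+2 + c*kap + 2*x - 1.
  have e : (2*a*kap + c)^+2 = 4 * (a * (a*kap^+2 + c*kap + A)).
    rewrite (_ : (2*a*kap + c)^+2 = 4*a*(a*kap^+2 + c*kap) + c^+2); last by ring.
    rewrite hcA; ring.
  have : 0 <= (2*a*kap + c)^+2 by apply: sqr_ge0.
  rewrite e => h4.
  have : 0 <= a * (a*kap^+2 + c*kap + A) by lra.
  rewrite pmulr_rge0 //; lra.
have : 0 <= b^+2*(a*kap^+2 + c*kap + 2*x - 1) by apply: mulr_ge0 => //; apply: sqr_ge0.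
have : 0 <= (2*x + w) * x * (x + 1) by apply: mulr_ge0; [apply: mulr_ge0|]; lra.
nra.
Qed.
Lemma min4 (u1 u2 u3 u4 : R) : 0 < u1 -> 0 < u2 -> 0 < u3 -> 0 < u4 ->
  exists e, [/\ 0 < e, e <= u1, e <= u2, e <= u3 & e <= u4].
Proof.
move=> h1 h2 h3 h4; exists (Num.min u1 (Num.min u2 (Num.min u3 u4))); split.
- by rewrite !lt_min h1 h2 h3 h4.
- by rewrite ge_min lexx.
- by rewrite ge_min ge_min lexx orbT.
- by rewrite ge_min ge_min ge_min lexx !orbT.
- by rewrite ge_min ge_min ge_min lexx !orbT.
Qed.

Lemma h_ge1 (y z : R) : 0 <= y -> y^+2 = z -> 1 <= z -> 1 <= y.
Proof. move=> h1 <- h2; nra. Qed.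
Lemma h_ltsq (x y : R) : 0 <= x -> x < y -> x^+2 < y^+2.
Proof. move=> h1 h2; nra. Qed.
Lemma h_lesq (x y : R) : 0 <= x -> x <= y -> x^+2 <= y^+2.
Proof. move=> h1 h2; nra. Qed.
Lemma h_lt1 (u X Y : R) : 0 < Y -> u * Y = X -> X < Y -> u < 1.
Proof. move=> h1 <- h2; nra. Qed.
Lemma h_ge14 (u X Y : R) : 0 < Y -> u * Y = X -> Y/4 <= X -> 1/4 <= u.
Proof. move=> h1 <- h2; nra. Qed.

Lemma exists_params (a c Q F m sig Rr : R) :
  a * F^+2 = 1 -> 2 < F -> Q + F^+2*c^+2/4 = F^+2/4 - 1 -> c = 1 - 2 * a * m -> 0 <= m -> 0 < sig ->
  1 - 2 * m * sig < F^+2*c^+2/4 -> 0 < Rr ->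
  exists x b kap, [/\ b != 0,
     b^+2*(a*kap^+2 + c*kap + 2*x - 1) + (Q + 2*x^+3 + 3*x^+2 + c*kap*x*(x+1)) = 0,
     0 <= 2*x + c*kap, 0 < x + m * sig - 1 &
     Rr <= (kap*b)^+2 + (x^+2+b^+2)*(2*x+c*kap)/a].
Proof.
move=> haF hF hQ hc hm hsig hA hRr.
have hF0 : 0 < F by lra.
have hFF : 0 < F^+2 by apply: exprn_gt0.
have hF2 : 4 < F^+2 by nra.
have ha : 0 < a.
  have : 0 < a * F^+2 by rewrite haF.
  by rewrite pmulr_lgt0.
have ha0 : a != 0 by rewrite gt_eqF.
have hia : a^-1 = F^+2.
  by apply: (mulfI ha0); rewrite mulfV // haF.
set A := F^+2*c^+2/4 in hQ hA.
set n0 := F^+2/4 - 1 in hQ.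
have hn0 : 0 < n0 by rewrite /n0; lra.
have hAp : 0 <= A by rewrite /A; apply: divr_ge0 => //; apply: mulr_ge0; apply: sqr_ge0.
have hcA : c^+2 = 4 * a * A.
  rewrite /A; have -> : 4 * a * (F^+2*c^+2/4) = (a * F^+2) * c^+2 by field.
  by rewrite haF mul1r.
have hQ' : Q = n0 - A by lra.
case: (ltP A 1) => hA1.
-
  set d := A - 1 + 2 * m * sig.
  have hd : 0 < d by rewrite /d; lra.
  have [e [he0 he1 he2 he3 he4]] := @min4 (d/2) ((1-A)/2) (n0/6)
     (n0*(1-A)*F^+2/(4*Rr)) ltac:(lra) ltac:(lra) ltac:(lra)
     ltac:(apply: divr_gt0; [apply: mulr_gt0; [apply: mulr_gt0; lra|done]|lra]).
  set x := (1 + A - e)/2.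
  set kap := -(c*F^+2/2).
  have hckap : c * kap = -2 * A by rewrite /kap /A; field.
  have hakap : a * kap^+2 = A.
    have -> : a * kap^+2 = (a * F^+2) * A by rewrite /kap /A; field.
    by rewrite haF mul1r.
  set Num := Q + 2*x^+3 + 3*x^+2 + c*kap*x*(x+1).
  have hNumE : Num = n0 - 3*e + ((1-A)*(1 + 3*A/4 + A^+2/4) + (e/4)*(1-A)*(3-A)
                     + e^+2*(6 + A - e)/4).
    by rewrite /Num hckap hQ' /x; field.
  have hNum : n0/2 <= Num.
    have t1 : 0 <= (1-A)*(1 + 3*A/4 + A^+2/4) by apply: mulr_ge0; nra.
    have t2 : 0 <= (e/4)*(1-A)*(3-A) by apply: mulr_ge0; [apply: mulr_ge0|]; lra.
    have t3 : 0 <= e^+2*(6 + A - e)/4 by apply: divr_ge0; [apply: mulr_ge0; [apply: sqr_ge0|lra]|lra].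
    rewrite hNumE; lra.
  have hNe : 0 < Num / e by apply: divr_gt0; lra.
  set b := Num.sqrt (Num / e).
  have hb2 : b^+2 = Num / e by rewrite /b sqr_sqrtr // ltW.
  have hb0 : 0 < b by rewrite /b sqrtr_gt0.
  exists x, b, kap; split.
  + by rewrite gt_eqF.
  + rewrite hb2 hakap -/Num hckap /x; field; rewrite gt_eqF //.
  + rewrite hckap /x; lra.
  + rewrite /x; move: he1; rewrite /d; lra.
  + have hY : (x^+2+b^+2)*(2*x+c*kap)/a = (x^+2+b^+2)*(1 - A - e)*F^+2.
      by rewrite -hia hckap /x; field.
    rewrite hY.
    have hk2 : 0 <= (kap*b)^+2 by apply: sqr_ge0.
    have hxx : 0 <= x^+2 by apply: sqr_ge0.
    have h1 : (1 - A)/2 <= 1 - A - e by lra.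
    have h2 : e * (b^+2 * ((1 - A)/2) * F^+2) <= e * ((x^+2+b^+2)*(1 - A - e)*F^+2).
      rewrite ler_pM2l //; rewrite ler_pM2r //; apply: ler_pM; try lra; apply: sqr_ge0.
    have h3 : e * (b^+2 * ((1 - A)/2) * F^+2) = Num * ((1-A)/2) * F^+2.
      by rewrite hb2; field; rewrite gt_eqF.
    have h4 : n0 / 2 * ((1-A)/2) * F^+2 <= Num * ((1-A)/2) * F^+2.
      by rewrite ler_pM2r // ler_pM2r //; lra.
    have h5 : e * Rr <= n0 / 2 * ((1-A)/2) * F^+2.
      have h := he4; rewrite ler_pdivlMr in h; last lra.
      rewrite (_ : n0/2*((1-A)/2)*F^+2 = (n0*(1-A)*F^+2)/4); last by field.
      rewrite ler_pdivlMr; last lra.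
      by rewrite (_ : e*Rr*4 = e*(4*Rr)); last ring.
    have h6 : e * Rr <= e * ((x^+2+b^+2)*(1 - A - e)*F^+2) by lra.
    rewrite ler_pM2l // in h6; lra.
-
  set AA := `|c| * F / 2.
  have hAA2 : AA^+2 = A.
    rewrite /AA /A; have -> : (`|c| * F / 2)^+2 = `|c|^+2 * F^+2 / 4 by field.
    by rewrite real_normK ?num_real //; field.
  have hAA0 : 0 <= AA by rewrite /AA; apply: divr_ge0 => //; apply: mulr_ge0 => //; lra.

  have hAA1 : 1 <= AA := h_ge1 _ _ hAA0 hAA2 hA1.
  have hc0 : c != 0.
    apply/eqP => c0; move: hA1; rewrite /A c0; lra.
  have hd2 : 0 < AA - 1 + m * sig.
    have [m0|mn0] := eqVneq m 0.
      have c1 : c = 1 by rewrite hc m0; ring.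
      rewrite m0 /AA c1 normr1; lra.
    have mp : 0 < m by rewrite lt_def mn0 hm.
    have : 0 < m * sig by apply: mulr_gt0.
    lra.
  have [t [ht0 ht1 ht2 ht3 ht4]] := @min4 (AA/2) (n0/(4*AA)) ((AA - 1 + m * sig)/2)
     (n0*F^+2/(16*Rr)) ltac:(lra) ltac:(apply: divr_gt0; lra) ltac:(lra)
     ltac:(apply: divr_gt0; [apply: mulr_gt0; lra|lra]).
  set x := AA - t.
  set kap := -(2*x/c).
  have hckap : c * kap = -2 * x by rewrite /kap; field.
  set Num := Q + 2*x^+3 + 3*x^+2 + c*kap*x*(x+1).
  have hNumE : Num = n0 - 2*AA*t + t^+2.
    by rewrite /Num hckap hQ' -hAA2 /x; ring.
  have hNum : n0/2 <= Num.
    have h := ht2; rewrite ler_pdivlMr in h; last lra.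
    have : 0 <= t^+2 by apply: sqr_ge0.
    rewrite hNumE; nra.
  set u := a * kap^+2.
  have hu1 : u * c^+2 = 4 * a * x^+2 by rewrite /u /kap; field.
  rewrite hcA in hu1.
  have hu2 : u * AA^+2 = x^+2.
    have h4a : 4 * a != 0 by rewrite mulf_neq0 // ?gt_eqF //; lra.
    apply: (mulfI h4a); rewrite hAA2 -hu1; ring.
  have hx0 : AA / 2 <= x by rewrite /x; lra.
  have hxA : x < AA by rewrite /x; lra.
  have hAApos : 0 < AA^+2 by apply: exprn_gt0; lra.
  have hu : u < 1.
    apply: (h_lt1 _ _ _ hAApos hu2); apply: h_ltsq => //; lra.
  have hu4 : 1/4 <= u.
    apply: (h_ge14 _ _ _ hAApos hu2).
    rewrite (_ : AA^+2/4 = (AA/2)^+2); last by field.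
    apply: h_lesq => //; lra.
  have hNe : 0 < Num / (1 - u) by apply: divr_gt0; lra.
  set b := Num.sqrt (Num / (1 - u)).
  have hb2 : b^+2 = Num / (1 - u) by rewrite /b sqr_sqrtr // ltW.
  have hb0 : 0 < b by rewrite /b sqrtr_gt0.
  exists x, b, kap; split.
  + by rewrite gt_eqF.
  + rewrite hb2 -/u -/Num hckap; field; rewrite subr_eq0 eq_sym lt_eqF //.
  + rewrite hckap; lra.
  + rewrite /x; lra.
  + rewrite hckap (_ : 2 * x + -2 * x = 0); last by ring.
    rewrite mulr0 mul0r addr0.
    have hk : (kap * b)^+2 = u * F^+2 * (Num / (1 - u)) by rewrite -hb2 /u -hia; field.
    rewrite hk.
    have h1 : (1 - u) * AA^+2 = t * (2 * AA - t) by rewrite mulrBl hu2 mul1r /x; ring.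
    have h2 : (1 - u) * AA <= 2 * t.
      have : (1 - u) * AA * AA <= 2 * t * AA.
        rewrite -mulrA -expr2 h1; nra.
      rewrite ler_pM2r //; lra.
    have h3 : 1 - u <= 2 * t by nra.
    have h5 : Rr * (1 - u) <= n0 * F^+2 / 8.
      have h := ht4; rewrite ler_pdivlMr in h; last lra.
      rewrite ler_pdivlMr; last lra.
      have : Rr * (1 - u) <= Rr * (2 * t) by rewrite ler_pM2l.
      nra.
    have h6 : n0 * F^+2 / 8 <= u * F^+2 * Num.
      have : 1/4 * F^+2 * (n0/2) <= u * F^+2 * Num.
        apply: ler_pM; [|apply: ltW; lra| |lra]; last first.
        apply: ler_pM; lra.
        by apply: mulr_ge0; lra.
      lra.
    rewrite mulrA ler_pdivlMr; last lra.
    lra.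
Qed.

Lemma cubicE (x b mL k eta av : R) :
  - ((x +i* b) ^+ 3 + ((mL +i* k) - 1 - av%:C * (mL +i* k) ^+ 2) * (x +i* b))
    + ('i * eta%:C) ^+ 2 * av%:C * ((x +i* b) + 1)
  = (- REq x b k (eta^+2) av (1 - 2 * av * mL) (mL - 1 - av * mL^+2))
    +i* (- IMq x b k (eta^+2) av (1 - 2 * av * mL) (mL - 1 - av * mL^+2)).
Proof.
rewrite !exprS !expr0 !mulr1 !cRE c1E.
rewrite !(cmulE, caddE, coppE).
congr (_ +i* _); rewrite /REq /IMq; ring.
Qed.

End Aux.

Arguments entryN {R}.
Arguments cmxE {R}.
Arguments mx3E {R}.
Arguments detN {R}.
Arguments cmulE {R}.
Arguments caddE {R}.
Arguments coppE {R}.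
Arguments c1E {R}.
Arguments cRE {R}.
Arguments detA1C {R}.
Arguments A1_unit {R}.
Arguments Gsub {R}.
Arguments disp_det {R}.
Arguments muE {R}.
Arguments REq {R}.
Arguments IMq {R}.
Arguments build {R}.
Arguments no_root {R}.
Arguments min4 {R}.
Arguments h_ge1 {R}.
Arguments h_ltsq {R}.
Arguments h_lesq {R}.
Arguments h_lt1 {R}.
Arguments h_ge14 {R}.
Arguments exists_params {R}.
Arguments cubicE {R}.

Section Aux2.
Local Open Scope complex_scope.
Variable R : realType.
Lemma ReC (z : R[i]) : Num.Theory.Re z = (complex.Re z)%:C.
Proof. by rewrite Num.Theory.ReE ReJ_add. Qed.
Lemma ReC_gt0 (z : R[i]) : (0 < Num.Theory.Re z) = (0 < complex.Re z).
Proof. by rewrite ReC ltcE /= eqxx. Qed.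
Lemma ReC_lt0 (z : R[i]) : (Num.Theory.Re z < 0) = (complex.Re z < 0).
Proof. by rewrite ReC ltcE /= eqxx. Qed.
Lemma cReE (u v : R) : complex.Re (u +i* v) = u. Proof. by []. Qed.
Lemma cImE (u v : R) : complex.Im (u +i* v) = v. Proof. by []. Qed.

Lemma Re_lam (x b mL k S : R) :
  complex.Re ((x +i* b) + (mL +i* k) * S%:C - 1) = x + mL * S - 1.
Proof. rewrite cRE c1E cmulE coppE !caddE cReE; ring. Qed.

Lemma root_build (nu F mL x b kap : R) : 0 < F ->
  (1 - s_of nu) * ((s_of nu - 1) ^+ 2 - 1 / F ^+ 2) != 0 -> b != 0 ->
  b^+2*((1 / F^+2)*kap^+2 + (1 - 2 * (1 / F^+2) * mL)*kap + 2*x - 1)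
    + ((mL - 1 - (1 / F^+2) * mL^+2) + 2*x^+3 + 3*x^+2 + (1 - 2 * (1 / F^+2) * mL)*kap*x*(x+1)) = 0 ->
  0 <= 2*x + (1 - 2 * (1 / F^+2) * mL)*kap ->
  disp_root nu F mL (kap*b)
    (Num.sqrt ((x^+2+b^+2)*(2*x+(1 - 2 * (1 / F^+2) * mL)*kap)/(1 / F^+2)))
    ((x +i* b) + (mL +i* (kap*b)) * (s_of nu - 1)%:C - 1).
Proof.
move=> hF hdet hb heq hw.
have ha : 0 < 1 / F^+2 by apply: divr_gt0 => //; apply: exprn_gt0.
have [hre him] := @build _ _ _ _ _ _ _ (lt0r_neq0 ha) heq.
rewrite disp_det; last exact: A1_unit.
rewrite muE.
rewrite (@detN _ nu F _ (mL +i* (kap * b)) (x +i* b)); last by ring.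
rewrite cubicE sqr_sqrtr; last first.
  apply: divr_ge0; last exact: ltW.
  apply: mulr_ge0 => //; apply: addr_ge0; apply: sqr_ge0.
by rewrite hre him oppr0.
Qed.

Lemma root_char (nu F mL k eta : R) (lam : R[i]) : 0 < F ->
  (1 - s_of nu) * ((s_of nu - 1) ^+ 2 - 1 / F ^+ 2) != 0 ->
  disp_root nu F mL k eta lam ->
  exists x b, [/\ complex.Re lam = x + mL * (s_of nu - 1) - 1,
    REq x b k (eta^+2) (1 / F^+2) (1 - 2 * (1 / F^+2) * mL) (mL - 1 - (1 / F^+2) * mL^+2) = 0 &
    IMq x b k (eta^+2) (1 / F^+2) (1 - 2 * (1 / F^+2) * mL) (mL - 1 - (1 / F^+2) * mL^+2) = 0].
Proof.
move=> hF hdet.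
rewrite disp_det; last exact: A1_unit.
rewrite muE.
move Ey : (lam - (mL +i* k) * (s_of nu - 1)%:C + 1) => y.
case: y Ey => x b Ey.
rewrite (@detN _ nu F _ (mL +i* k) (x +i* b)) ?Ey // cubicE => h.
have h1 := congr1 (@complex.Re R) h; have h2 := congr1 (@complex.Im R) h.
rewrite cReE in h1; rewrite cImE in h2.
exists x, b; split.
- have -> : lam = (x +i* b) + (mL +i* k) * (s_of nu - 1)%:C - 1 by rewrite -Ey; ring.
  by rewrite Re_lam.
- by rewrite -[LHS]opprK h1 oppr0.
- by rewrite -[LHS]opprK h2 oppr0.
Qed.

End Aux2.

Section Main.
Variable R : realType.

Lemma nu_facts (nu : R) : 1 < nu ->
  [/\ 2 < F_exist nu, s_of nu - 1 = 1 / F_exist nu,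
      0 < Num.sqrt (nu ^+ 2 + nu - 1),
      (Num.sqrt (nu ^+ 2 + nu - 1))^+2 = F_exist nu - 1 &
      F_2d nu = F_exist nu / Num.sqrt (nu ^+ 2 + nu - 1)].
Proof.
move=> hnu.
have hD : 0 < nu ^+ 2 + nu - 1 by nra.
split.
- rewrite /F_exist; nra.
- rewrite /s_of /F_exist; field.
  by apply/andP; split; apply: lt0r_neq0; lra.
- by rewrite sqrtr_gt0.
- by rewrite sqr_sqrtr ?ltW // /F_exist; ring.
- by [].
Qed.

Lemma det_nz (Fe F : R) (s : R) : 2 < Fe -> s - 1 = 1 / Fe -> 0 < F -> F < Fe ->
  (1 - s) * ((s - 1) ^+ 2 - 1 / F ^+ 2) != 0.
Proof.
move=> hFe hs hF hFF.
rewrite mulf_neq0 //.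
  rewrite (_ : 1 - s = - (s - 1)); last by ring.
  rewrite hs oppr_eq0; apply: lt0r_neq0 => //; apply: divr_gt0; lra.
rewrite hs subr_eq0 ?expr_div_n ?expr1n; apply/negP => /eqP h.
have : Fe^+2 = F^+2.
  have h1 : Fe^+2 != 0 by rewrite expf_neq0 // gt_eqF //; lra.
  have h2 : F^+2 != 0 by rewrite expf_neq0 // gt_eqF.
  by move: h; rewrite !div1r => /invr_inj.
move=> h3; have : F^+2 < Fe^+2 by apply: h_ltsq; lra.
by rewrite h3 ltxx.
Qed.


Lemma lt_of_sq (r m0 : R) : 0 <= r -> 0 < m0 -> r^+2 < m0^+2 -> r < m0.
Proof. move=> h1 h2 h3; nra. Qed.

Lemma sq_lt (u r : R) : - r < u -> u < r -> u^+2 < r^+2.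
Proof. move=> h1 h2; nra. Qed.

Lemma pos_of_mul (P X : R) : 0 < P -> P * X = X * P -> 0 < P * X -> 0 < X.
Proof. by move=> hP _ h; rewrite pmulr_rgt0 in h. Qed.

End Main.
Arguments nu_facts {R}. Arguments det_nz {R}. Arguments lt_of_sq {R}. Arguments sq_lt {R}.
Arguments Re_lam {R}. Arguments root_build {R}. Arguments root_char {R}.
Arguments ReC_gt0 {R}. Arguments ReC_lt0 {R}.

Theorem mainTheorem5 (R : realType) (nu F : R) (hnu : 1 < nu) :
  (* (i) *)
  (F_2d nu < F < F_exist nu ->
     forall muL : R, 0 <= muL -> forall Rr : R, 0 < Rr ->
       exists k eta : R, Rr <= k ^+ 2 + eta ^+ 2 /\
         exists lambda : R[i], disp_root nu F muL k eta lambda /\ 0 < Re lambda)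
  /\
  (* (ii) *)
  (let lo := F ^+ 2 / 2 - F ^+ 2 / F_exist nu
             - F / F_2d nu * Num.sqrt (F_2d nu ^+ 2 - F ^+ 2) in
   let hi := F ^+ 2 / 2 - F ^+ 2 / F_exist nu
             + F / F_2d nu * Num.sqrt (F_2d nu ^+ 2 - F ^+ 2) in
   2 < F < F_2d nu -> forall muL : R, lo < muL < hi ->
     (forall x : R, lo < x < hi -> 0 < x) /\
     exists Rr : R, 0 < Rr /\
       forall k eta : R, Rr <= k ^+ 2 + eta ^+ 2 ->
         forall lambda : R[i], disp_root nu F muL k eta lambda -> Re lambda < 0).
Proof.
have [hFe hsig hq hq2 hF2d] := nu_facts nu hnu.
set Fe := F_exist nu in hFe hsig hq2 hF2d *.
set q := Num.sqrt (nu ^+ 2 + nu - 1) in hq hq2 hF2d.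
have hFe0 : 0 < Fe by lra.
have hq1 : 1 < q by nra.
split.
- move=> /andP[h1 h2] m hm Rr hRr.
  rewrite hF2d in h1.
  have h2q : 2 * q < Fe.
    have : 0 < (Fe - 2 * q) * (Fe + 2 * q).
      have -> : (Fe - 2 * q) * (Fe + 2 * q) = (Fe - 2)^+2.
        rewrite (_ : (Fe - 2 * q) * (Fe + 2 * q) = Fe^+2 - 4 * q^+2); last by ring.
        by rewrite hq2; ring.
      by rewrite exprn_gt0 // subr_gt0.
    rewrite pmulr_lgt0; [lra|lra].
  have hF : 2 < F.
    have : 2 < Fe / q by rewrite ltr_pdivlMr; lra.
    lra.
  have hF0 : 0 < F by lra.
  have hFq : Fe < F * q by rewrite -ltr_pdivrMr.
  set a := 1 / F^+2.
  set c := 1 - 2 * a * m.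
  set Q := m - 1 - a * m^+2.
  have haF : a * F^+2 = 1 by rewrite /a; field; rewrite gt_eqF.
  have hQ : Q + F^+2*c^+2/4 = F^+2/4 - 1 by rewrite /Q /c /a; field; rewrite gt_eqF.
  have hA : 1 - 2 * m * (s_of nu - 1) < F^+2*c^+2/4.
    rewrite hsig.
    set m0 := F^+2/2 - F^+2/Fe.
    have hid : F^+2 * (F^+2*c^+2/4 - 1 + 2 * m * (1 / Fe)) =
               (m - m0)^+2 + F^+2 * ((F * q)^+2 - Fe^+2) / Fe^+2.
      rewrite exprMn hq2 /c /a /m0; field.
      by rewrite !gt_eqF.
    have hp : 0 < F^+2 * (F^+2*c^+2/4 - 1 + 2 * m * (1 / Fe)).
      rewrite hid.
      have : 0 < F^+2 * ((F * q)^+2 - Fe^+2) / Fe^+2.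
        apply: divr_gt0; last by apply: exprn_gt0.
        apply: mulr_gt0; first by apply: exprn_gt0.
        rewrite subr_gt0; apply: h_ltsq; lra.
      have : 0 <= (m - m0)^+2 by apply: sqr_ge0.
      lra.
    rewrite pmulr_rgt0 in hp; last by apply: exprn_gt0.
    lra.
  have hsig0 : 0 < s_of nu - 1 by rewrite hsig; apply: divr_gt0; lra.
  have [x [b [kap [hb heq hw hre hsz]]]] :=
    @exists_params _ _ _ _ _ _ _ _ haF hF hQ (erefl c) hm hsig0 hA hRr.
  have hE : 0 <= (x^+2+b^+2)*(2*x+c*kap)/a.
    apply: divr_ge0; last by rewrite /a; apply: divr_ge0 => //; apply: sqr_ge0.
    by apply: mulr_ge0 => //; apply: addr_ge0; apply: sqr_ge0.
  exists (kap * b), (Num.sqrt ((x^+2+b^+2)*(2*x+c*kap)/a)); split.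
    by rewrite sqr_sqrtr.
  exists ((x +i* b) + (m +i* (kap*b)) * (s_of nu - 1)%:C - 1)%C; split.
    apply: root_build => //.
    exact: (@det_nz _ _ _ _ hFe hsig hF0 h2).
  by rewrite ReC_gt0 Re_lam.
- move=> lo hi /andP[h1 h2] m /andP[hlo hhi].
  rewrite /lo /hi hF2d in hlo hhi *.
  have hF0 : 0 < F by lra.
  have hFFe : F < Fe.
    have : Fe / q < Fe by rewrite ltr_pdivrMr //; nra.
    lra.
  have hq0 : q != 0 by rewrite gt_eqF.
  have hFe00 : Fe != 0 by rewrite gt_eqF.
  set p := Num.sqrt ((Fe / q)^+2 - F^+2).
  have hp0 : 0 <= p by apply: sqrtr_ge0.
  have hp2 : p^+2 = (Fe / q)^+2 - F^+2.
    rewrite sqr_sqrtr // subr_ge0; apply: ltW; apply: h_ltsq; lra.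
  set r := F / (Fe / q) * p.
  have hr0 : 0 <= r by apply: mulr_ge0 => //; apply: divr_ge0; [lra| apply: divr_ge0; lra].
  have hr2 : r^+2 = F^+2 - F^+4 * (Fe - 1) / Fe^+2.
    rewrite /r exprMn hp2 -hq2; field.
    by rewrite hq0 hFe00.
  set m0 := F^+2/2 - F^+2/Fe.
  have hm0 : 0 < m0.
    rewrite /m0 (_ : F^+2/2 - F^+2/Fe = F^+2 * (Fe - 2) / (2 * Fe)); last by field.
    apply: divr_gt0; [apply: mulr_gt0; [apply: exprn_gt0|]|]; lra.
  have hrm0 : r < m0.
    apply: lt_of_sq => //.
    have : m0^+2 - r^+2 = F^+2 * (F^+2/4 - 1).
      by rewrite hr2 /m0; field.
    have : 0 < F^+2 * (F^+2/4 - 1).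
      apply: mulr_gt0; first by apply: exprn_gt0.
      have : 4 < F^+2 by nra.
      lra.
    lra.
  split.
    move=> z /andP[hz _]; rewrite -/p -/r -/m0 in hz; lra.
  exists 1; split; first lra.
  move=> k eta _ lam hroot.
  have [x [b [hRe hRE hIM]]] := @root_char _ _ _ _ _ _ _ hF0 (@det_nz _ _ _ _ hFe hsig hF0 hFFe) hroot.
  rewrite ReC_lt0 hRe.
  rewrite -/p -/r -/m0 in hlo hhi.
  set a := 1 / F^+2 in hRE hIM.
  set c := 1 - 2 * a * m in hRE hIM.
  set Q := m - 1 - a * m^+2 in hRE hIM.
  have ha : 0 < a by rewrite /a; apply: divr_gt0 => //; apply: exprn_gt0.
  have haF : a * F^+2 = 1 by rewrite /a; field; rewrite gt_eqF.
  have hQ : Q + F^+2*c^+2/4 = F^+2/4 - 1 by rewrite /Q /c /a; field; rewrite gt_eqF.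
  have hA : F^+2*c^+2/4 < 1 - 2 * m * (s_of nu - 1).
    rewrite hsig.
    have hid : F^+2 * (F^+2*c^+2/4 - 1 + 2 * m * (1 / Fe)) = (m - m0)^+2 - r^+2.
      rewrite hr2 /c /a /m0; field.
      by rewrite ?(gt_eqF hF0) ?(gt_eqF hFe0).
    have : (m - m0)^+2 < r^+2 by apply: sq_lt; lra.
    rewrite -subr_lt0 -hid pmulr_rlt0; last by apply: exprn_gt0.
    lra.
  rewrite ltNge; apply/negP => hx.
  apply: (@no_root _ _ _ _ _ _ _ _ _ ha haF h1 (sqr_ge0 eta) hQ _ hRE hIM).
  lra.
Qed.
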